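(* Let $(A,B)$ and $(A',B')$ be two weakly non-singular pairs of loxodromic elements in $\mathrm{Sp}(n,1)$, with associated tuples $p=(p_1,\dots,p_{2n})$ and $p'=(p'_1,\dots,p'_{2n})$ and normalized Gram matrices $G(p)$, $G(p')$. Then there exists $C\in\mathrm{Sp}(n,1)$ with $C(p_i)=p'_i$ for $i=1,\dots,2n$ if and only if $O_{G(p)}=O_{G(p')}$.
   Context: $\mathbb H^{n,1}$: right $\mathbb H$-vector space $\mathbb H^{n+1}$ with form $\langle\mathbf z,\mathbf w\rangle=\bar w_{n+1}z_1+\bar w_2z_2+\dots+\bar w_nz_n+\bar w_1z_{n+1}$; points of $\mathbb H\mathbb P^n$ are right lines, $\mathbf z\mapsto z$. $\mathrm{Sp}(n,1)$ preserves the form. A loxodromic $A$ (exactly two boundary fixed points, no real eigenvalue) has null eigenvectors $\mathbf a_A,\mathbf r_A$ (attracting/repelling fixed points $a_A,r_A$) and positive eigenvectors $\mathbf x_{j,A}$, $1\le j\le n-1$ (points $x_{j,A}$). A pair $(A,B)$ is weakly non-singular if $A,B$ are regular (right-eigenvalue similarity classes pairwise distinct), have no common fixed point, and $n-2$ canonical flags $(a_A,L_A,W_{j,A})$ of $A$ form generic pairs with $n-2$ canonical flags of $B$ (here $L_A$ is the $\mathbb H$-line through $a_A,r_A$, $W_{j,A}$ the projectivization of $\mathbf x_{j,A}^\perp$; flags $(p,C,\Pi),(p',C',\Pi')$ are a generic pair if $p\notin\partial C'$, $p'\notin\partial C$, $\partial C\cap\partial\Pi'=\emptyset=\partial C'\cap\partial\Pi$);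 indices are arranged so that for $1\le k\le n-2$, $\langle\mathbf x_{k,A},\mathbf a_B\rangle,\langle\mathbf x_{k,B},\mathbf a_A\rangle,\langle\mathbf r_A,\mathbf x_{k,B}\rangle,\langle\mathbf r_B,\mathbf x_{k,A}\rangle\ne0$. Associated tuple: $p_1=a_A,p_2=r_A,p_3=a_B,p_4=r_B$, $p_j=x_{j-4,A}$ ($5\le j\le n+2$), $p_k=x_{k-(n+2),B}$ ($n+3\le k\le 2n$). The Gram matrix $G(p)=(\langle\mathbf p_i,\mathbf p_j\rangle)$ is normalized if the lifts satisfy $g_{12}=g_{13}=g_{14}=1$, $|g_{23}|=1$, $g_{1k}=1$ ($n+3\le k\le 2n$), $g_{3j}=1$ ($5\le j\le n+2$); it is well defined up to the action $g_{ij}\mapsto\mu g_{ij}\bar\mu$ of $\mu\in\mathrm{Sp}(1)$ (unit quaternions). $O_{G(p)}=\{(\mu g_{ij}\bar\mu)_{i,j}:\mu\in\mathrm{Sp}(1)\}$ is this $\mathrm{Sp}(1)$-orbit. *)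

(* Defs.v *)
(* Quaternions over a real field
   R : realType are defined here as a record of four reals, equipped with a
   (non-commutative) nzRing structure; the right H-vector space H^{n,1} is
   the type of column vectors 'cV[quat R]_(n.+1), and quaternionic
   (n+1)x(n+1) matrices act on the left. *)
From HB Require Import structures.
From mathcomp Require Import all_boot all_order all_algebra.
From mathcomp Require Import all_reals.
From mathcomp Require Import ring.
Set Implicit Arguments.
Unset Strict Implicit.
Unset Printing Implicit Defensive.
Import Order.TTheory GRing.Theory Num.Theory.
Local Open Scope ring_scope.

(* Quaternions  q = q0 + q1 i + q2 j + q3 k                           *)
Record quat (R : realType) := Quat { q0 : R; q1 : R; q2 : R; q3 : R }.
Arguments Quat {R}.

Section Quaternions.
Variable R : realType.

Definition quat2tup (q : quat R) : R * R * R * R := (q0 q, q1 q, q2 q, q3 q).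
Definition tup2quat (t : R * R * R * R) : quat R :=
  let: (a, b, c, d) := t in Quat a b c d.
Lemma quat2tupK : cancel quat2tup tup2quat. Proof. by case. Qed.

HB.instance Definition _ := Equality.copy (quat R) (can_type quat2tupK).
HB.instance Definition _ := Choice.copy (quat R) (can_type quat2tupK).

Definition qzero : quat R := Quat 0 0 0 0.
Definition qone : quat R := Quat 1 0 0 0.
Definition qadd (p q : quat R) : quat R :=
  Quat (q0 p + q0 q) (q1 p + q1 q) (q2 p + q2 q) (q3 p + q3 q).
Definition qopp (p : quat R) : quat R := Quat (- q0 p) (- q1 p) (- q2 p) (- q3 p).
(* Hamilton product: i^2 = j^2 = k^2 = ijk = -1 *)
Definition qmul (p q : quat R) : quat R :=
  Quat (q0 p * q0 q - q1 p * q1 q - q2 p * q2 q - q3 p * q3 q)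
       (q0 p * q1 q + q1 p * q0 q + q2 p * q3 q - q3 p * q2 q)
       (q0 p * q2 q - q1 p * q3 q + q2 p * q0 q + q3 p * q1 q)
       (q0 p * q3 q + q1 p * q2 q - q2 p * q1 q + q3 p * q0 q).

Lemma qaddA : associative qadd.
Proof. by case=> ? ? ? ?; case=> ? ? ? ?; case=> ? ? ? ?; rewrite /qadd /= !addrA. Qed.
Lemma qaddC : commutative qadd.
Proof. by case=> ? ? ? ?; case=> ? ? ? ?; rewrite /qadd /= [X in Quat X _ _ _]addrC
  [X in Quat _ X _ _]addrC [X in Quat _ _ X _]addrC [X in Quat _ _ _ X]addrC. Qed.
Lemma qadd0 : left_id qzero qadd.
Proof. by case=> ? ? ? ?; rewrite /qadd /= !add0r. Qed.
Lemma qaddN : left_inverse qzero qopp qadd.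
Proof. by case=> ? ? ? ?; rewrite /qadd /= !addNr. Qed.

HB.instance Definition _ := GRing.isZmodule.Build (quat R) qaddA qaddC qadd0 qaddN.

Lemma qmulA : associative qmul.
Proof. by case=> ? ? ? ?; case=> ? ? ? ?; case=> ? ? ? ?; rewrite /qmul /=; congr Quat; ring. Qed.
Lemma qmul1 : left_id qone qmul.
Proof. by case=> ? ? ? ?; rewrite /qmul /=; congr Quat; ring. Qed.
Lemma qmulr1 : right_id qone qmul.
Proof. by case=> ? ? ? ?; rewrite /qmul /=; congr Quat; ring. Qed.
Lemma qmulDl : left_distributive qmul qadd.
Proof. by case=> ? ? ? ?; case=> ? ? ? ?; case=> ? ? ? ?; rewrite /qmul /= /qadd /=; congr Quat; ring. Qed.
Lemma qmulDr : right_distributive qmul qadd.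
Proof. by case=> ? ? ? ?; case=> ? ? ? ?; case=> ? ? ? ?; rewrite /qmul /= /qadd /=; congr Quat; ring. Qed.
Lemma qone_neq0 : qone != 0.
Proof. by apply/eqP => /(f_equal (@q0 R)) /= /eqP; rewrite oner_eq0. Qed.

HB.instance Definition _ :=
  GRing.Zmodule_isNzRing.Build (quat R) qmulA qmul1 qmulr1 qmulDl qmulDr qone_neq0.

Definition qreal (r : R) : quat R := Quat r 0 0 0.
Definition qconj (q : quat R) : quat R := Quat (q0 q) (- q1 q) (- q2 q) (- q3 q).
Definition qnorm2 (q : quat R) : R := q0 q ^+ 2 + q1 q ^+ 2 + q2 q ^+ 2 + q3 q ^+ 2.
Definition is_unit_quat (mu : quat R) : Prop := qnorm2 mu = 1.
(* similarity of quaternions: mu = q lam q^{-1} for some q <> 0 *)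
Definition qsimilar (lam mu : quat R) : Prop := exists q : quat R, q != 0 /\ q * lam = mu * q.
End Quaternions.

(* Coordinates z_1,...,z_{n+1} are the entries z 0 0, ..., z n 0.      *)
Section Hyperbolic.
Variable R : realType.
Variable n : nat.

Definition qvec := 'cV[quat R]_(n.+1).

Definition rscale (z : qvec) (lam : quat R) : qvec := map_mx (fun c => c * lam) z.

(* <z,w> = \bar w_{n+1} z_1 + \bar w_2 z_2 + ... + \bar w_n z_n + \bar w_1 z_{n+1} *)
Definition hform (z w : qvec) : quat R :=
  qconj (w ord_max 0) * z ord0 0
  + \sum_(i < n.+1 | (0 < (i : nat) < n)%N) qconj (w i 0) * z i 0
  + qconj (w ord0 0) * z ord_max 0.

Definition in_Sp (A : 'M[quat R]_(n.+1)) : Prop :=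
  forall z w : qvec, hform (A *m z) (A *m w) = hform z w.

Definition null_vec (z : qvec) : Prop := z != 0 /\ hform z z = 0.
Definition pos_vec (z : qvec) : Prop := exists2 r : R, 0 < r & hform z z = qreal r.

(* z and w (nonzero) represent the same point of HP^n (same right line) *)
Definition same_point (z w : qvec) : Prop :=
  z != 0 /\ w != 0 /\ exists lam : quat R, lam != 0 /\ z = rscale w lam.

Definition eigen (A : 'M[quat R]_(n.+1)) (z : qvec) (lam : quat R) : Prop :=
  z != 0 /\ A *m z = rscale z lam.

Definition bd_fixed (A : 'M[quat R]_(n.+1)) (z : qvec) : Prop :=
  null_vec z /\ exists lam, eigen A z lam.

Definition loxodromic (A : 'M[quat R]_(n.+1)) : Prop :=
  [/\ in_Sp A,
      (exists u v, [/\ bd_fixed A u, bd_fixed A v, ~ same_point u v &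
                       forall z, bd_fixed A z -> same_point z u \/ same_point z v])
    & forall (z : qvec) (r : R), ~ eigen A z (qreal r)].

Definition lox_eigvecs (A : 'M[quat R]_(n.+1)) (a r : qvec) (x : nat -> qvec) : Prop :=
  [/\ loxodromic A,
      null_vec a /\ (exists2 lam, eigen A a lam & 1 < qnorm2 lam),
      null_vec r /\ (exists2 lam, eigen A r lam & qnorm2 lam < 1)
    & forall j, (1 <= j <= n.-1)%N -> pos_vec (x j) /\ exists lam, eigen A (x j) lam].

Definition eigfamily (a r : qvec) (x : nat -> qvec) (i : nat) : qvec :=
  if i == 0%N then a else if i == 1%N then r else x i.-1.

Definition regular (A : 'M[quat R]_(n.+1)) (a r : qvec) (x : nat -> qvec) : Prop :=
  forall i j lam mu, (i <= n)%N -> (j <= n)%N -> i <> j ->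
    eigen A (eigfamily a r x i) lam -> eigen A (eigfamily a r x j) mu ->
    ~ qsimilar lam mu.

Definition in_Hline (u v z : qvec) : Prop :=
  exists alpha beta : quat R, z = rscale u alpha + rscale v beta.
Definition bd_Hline (u v z : qvec) : Prop := null_vec z /\ in_Hline u v z.
Definition bd_perp (x z : qvec) : Prop := null_vec z /\ hform z x = 0.

(* canonical flag (a, L, W_j) with L = H-line(a, r), W_j = P(x_j^perp);
   generic pair of flags (p, C, Pi), (p', C', Pi') *)
Definition generic_flags (a r x a' r' x' : qvec) : Prop :=
  [/\ ~ bd_Hline a' r' a, ~ bd_Hline a r a',
      (forall z, ~ (bd_Hline a r z /\ bd_perp x' z)) &
      (forall z, ~ (bd_Hline a' r' z /\ bd_perp x z))].

Definition weakly_nonsingular (A B : 'M[quat R]_(n.+1))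
    (aA rA : qvec) (xA : nat -> qvec) (aB rB : qvec) (xB : nat -> qvec) : Prop :=
  [/\ lox_eigvecs A aA rA xA, lox_eigvecs B aB rB xB,
      regular A aA rA xA /\ regular B aB rB xB,
      (forall z, ~ (bd_fixed A z /\ bd_fixed B z)) &
      forall k, (1 <= k <= n - 2)%N ->
        [/\ generic_flags aA rA (xA k) aB rB (xB k),
            hform (xA k) aB != 0, hform (xB k) aA != 0,
            hform rA (xB k) != 0 & hform rB (xA k) != 0]].

(* associated tuple p_1, ..., p_{2n} (1-based) *)
Definition assoc_tuple (aA rA : qvec) (xA : nat -> qvec) (aB rB : qvec)
    (xB : nat -> qvec) (i : nat) : qvec :=
  if i == 1%N then aA else if i == 2%N then rA
  else if i == 3%N then aB else if i == 4%N then rB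
  else if (i <= n.+2)%N then xA (i - 4)%N else xB (i - n.+2)%N.

Definition gram_entry (p : nat -> qvec) (i j : nat) : quat R := hform (p i) (p j).

Definition gram (p : nat -> qvec) : 'M[quat R]_(2 * n) :=
  \matrix_(i < 2 * n, j < 2 * n) gram_entry p i.+1 j.+1.

Definition normalized (p : nat -> qvec) : Prop :=
  let g := gram_entry p in
  [/\ g 1 2 = 1 /\ g 1 3 = 1, g 1 4 = 1, qnorm2 (g 2 3) = 1,
      (forall k, (n.+3 <= k <= 2 * n)%N -> g 1 k = 1) &
      (forall j, (5 <= j <= n.+2)%N -> g 3 j = 1)].

Definition Sp1_orbit (G : 'M[quat R]_(2 * n)) : 'M[quat R]_(2 * n) -> Prop :=
  fun M => exists mu : quat R, is_unit_quat mu /\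
             M = \matrix_(i, j) (mu * G i j * qconj mu).

End Hyperbolic.

(* Main.v *)
Require Import Defs.
From HB Require Import structures.
From mathcomp Require Import all_boot all_order all_algebra.
From mathcomp Require Import all_reals.
From mathcomp Require Import ring lra zify.
Import Order.TTheory GRing.Theory Num.Theory.
Set Implicit Arguments.
Unset Strict Implicit.
Unset Printing Implicit Defensive.
Local Open Scope ring_scope.

Section QuatLemmas.
Variable R : realType.
Local Notation H := (quat R).

Lemma quatP (a b : H) : q0 a = q0 b -> q1 a = q1 b -> q2 a = q2 b -> q3 a = q3 b -> a = b.
Proof. by case: a => ? ? ? ?; case: b => ? ? ? ? /= -> -> -> ->. Qed.

Lemma q0M (a b : H) : q0 (a * b) = q0 a * q0 b - q1 a * q1 b - q2 a * q2 b - q3 a * q3 b.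
Proof. by []. Qed.
Lemma q1M (a b : H) : q1 (a * b) = q0 a * q1 b + q1 a * q0 b + q2 a * q3 b - q3 a * q2 b.
Proof. by []. Qed.
Lemma q2M (a b : H) : q2 (a * b) = q0 a * q2 b - q1 a * q3 b + q2 a * q0 b + q3 a * q1 b.
Proof. by []. Qed.
Lemma q3M (a b : H) : q3 (a * b) = q0 a * q3 b + q1 a * q2 b - q2 a * q1 b + q3 a * q0 b.
Proof. by []. Qed.
Lemma q0D (a b : H) : q0 (a + b) = q0 a + q0 b. Proof. by []. Qed.
Lemma q1D (a b : H) : q1 (a + b) = q1 a + q1 b. Proof. by []. Qed.
Lemma q2D (a b : H) : q2 (a + b) = q2 a + q2 b. Proof. by []. Qed.
Lemma q3D (a b : H) : q3 (a + b) = q3 a + q3 b. Proof. by []. Qed.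
Lemma q0N (a : H) : q0 (- a) = - q0 a. Proof. by []. Qed.
Lemma q1N (a : H) : q1 (- a) = - q1 a. Proof. by []. Qed.
Lemma q2N (a : H) : q2 (- a) = - q2 a. Proof. by []. Qed.
Lemma q3N (a : H) : q3 (- a) = - q3 a. Proof. by []. Qed.
Lemma q0_0 : q0 (0 : H) = 0. Proof. by []. Qed.
Lemma q1_0 : q1 (0 : H) = 0. Proof. by []. Qed.
Lemma q2_0 : q2 (0 : H) = 0. Proof. by []. Qed.
Lemma q3_0 : q3 (0 : H) = 0. Proof. by []. Qed.
Lemma q0_1 : q0 (1 : H) = 1. Proof. by []. Qed.
Lemma q1_1 : q1 (1 : H) = 0. Proof. by []. Qed.
Lemma q2_1 : q2 (1 : H) = 0. Proof. by []. Qed.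
Lemma q3_1 : q3 (1 : H) = 0. Proof. by []. Qed.

Definition qE := (q0M, q1M, q2M, q3M, q0D, q1D, q2D, q3D, q0N, q1N, q2N, q3N,
  q0_0, q1_0, q2_0, q3_0, q0_1, q1_1, q2_1, q3_1).

Ltac qsolve := apply: quatP; rewrite ?qE /=; ring.

Lemma qconjM (a b : H) : qconj (a * b) = qconj b * qconj a. Proof. qsolve. Qed.
Lemma qconjD (a b : H) : qconj (a + b) = qconj a + qconj b. Proof. qsolve. Qed.
Lemma qconjN (a : H) : qconj (- a) = - qconj a. Proof. qsolve. Qed.
Lemma qconjB (a b : H) : qconj (a - b) = qconj a - qconj b. Proof. qsolve. Qed.
Lemma qconj0 : qconj (0 : H) = 0. Proof. qsolve. Qed.
Lemma qconj1 : qconj (1 : H) = 1. Proof. qsolve. Qed.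
Lemma qconjK (a : H) : qconj (qconj a) = a. Proof. qsolve. Qed.
Lemma qconj_real (r : R) : qconj (qreal r) = qreal r. Proof. qsolve. Qed.
Lemma qreal_comm (r : R) (a : H) : qreal r * a = a * qreal r. Proof. qsolve. Qed.
Lemma qconj_mull (a : H) : qconj a * a = qreal (qnorm2 a). Proof. rewrite /qnorm2; qsolve. Qed.
Lemma qconj_mulr (a : H) : a * qconj a = qreal (qnorm2 a). Proof. rewrite /qnorm2; qsolve. Qed.
Lemma qnorm2M (a b : H) : qnorm2 (a * b) = qnorm2 a * qnorm2 b.
Proof. rewrite /qnorm2 ?qE; ring. Qed.
Lemma qnorm2_conj (a : H) : qnorm2 (qconj a) = qnorm2 a.
Proof. rewrite /qnorm2 /=; ring. Qed.
Lemma qnorm2_ge0 (a : H) : 0 <= qnorm2 a.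
Proof. rewrite /qnorm2; nra. Qed.
Lemma qnorm2_eq0 (a : H) : qnorm2 a = 0 -> a = 0.
Proof.
rewrite /qnorm2 => h.
have h0 : q0 a = 0 by nra.
have h1 : q1 a = 0 by nra.
have h2 : q2 a = 0 by nra.
have h3 : q3 a = 0 by nra.
by apply: quatP; rewrite ?qE.
Qed.
Lemma qnorm2_gt0 (a : H) : a != 0 -> 0 < qnorm2 a.
Proof.
move=> a0; rewrite lt_neqAle qnorm2_ge0 andbT; apply/eqP => h.
by move/eqP: a0; apply; apply: qnorm2_eq0.
Qed.

Definition qinv (a : H) : H := qconj a * qreal (qnorm2 a)^-1.

Lemma qmulV (a : H) : a != 0 -> a * qinv a = 1.
Proof.
move=> /qnorm2_gt0 h; rewrite /qinv mulrA qconj_mulr.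
apply: quatP; rewrite ?qE /=; rewrite ?mulr0 ?subr0 ?addr0 ?mul0r ?add0r ?sub0r ?oppr0 //.
by rewrite mulfV // gt_eqF.
Qed.
Lemma qmulVr (a : H) : a != 0 -> qinv a * a = 1.
Proof.
move=> /qnorm2_gt0 h; rewrite /qinv -qreal_comm -mulrA qconj_mull.
apply: quatP; rewrite ?qE /=; rewrite ?mulr0 ?subr0 ?addr0 ?mul0r ?add0r ?sub0r ?oppr0 //.
by rewrite mulVf // gt_eqF.
Qed.

Lemma qmul_eq0l (a b : H) : a * b = 0 -> b != 0 -> a = 0.
Proof. by move=> h b0; rewrite -[a]mulr1 -(qmulV b0) mulrA h mul0r. Qed.
Lemma qmul_eq0r (a b : H) : a * b = 0 -> a != 0 -> b = 0.
Proof. by move=> h a0; rewrite -[b]mul1r -(qmulVr a0) -mulrA h mulr0. Qed.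
Lemma qmul_neq0 (a b : H) : a != 0 -> b != 0 -> a * b != 0.
Proof. by move=> a0 b0; apply/eqP => /qmul_eq0l /(_ b0) /eqP; rewrite (negPf a0). Qed.

Lemma qself_conj (a : H) : qconj a = a -> a = qreal (q0 a).
Proof.
case: a => a0 a1 a2 a3 [] h1 h2 h3; rewrite /qreal /=; congr Quat; lra.
Qed.
Lemma qreal_inj (r s : R) : qreal r = qreal s -> r = s.
Proof. by case. Qed.
Lemma qrealD (r s : R) : qreal (r + s) = qreal r + qreal s. Proof. qsolve. Qed.
Lemma qrealN (r : R) : qreal (- r) = - qreal r. Proof. qsolve. Qed.
Lemma qreal0 : qreal 0 = 0 :> H. Proof. qsolve. Qed.
Lemma qreal1 : qreal 1 = 1 :> H. Proof. qsolve. Qed.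
Lemma qrealM (r s : R) : qreal (r * s) = qreal r * qreal s :> H. Proof. qsolve. Qed.
Lemma q0_conj_real (b : H) (r : R) : q0 (qconj b * qreal r * b) = r * qnorm2 b.
Proof. rewrite /qnorm2; rewrite ?qE /=; ring. Qed.
Lemma q0_conj (a : H) : q0 (qconj a) = q0 a. Proof. by []. Qed.
Lemma q0_add_conj (a : H) : a + qconj a = qreal (q0 a + q0 a).
Proof. qsolve. Qed.

End QuatLemmas.

Lemma add3ACA (T : zmodType) (a a' b b' c c' : T) :
  (a + a') + (b + b') + (c + c') = (a + b + c) + (a' + b' + c').
Proof. rewrite -!addrA; congr (_ + _); rewrite (addrCA a'); congr (_ + _).
by rewrite (addrCA b' c) (addrCA a' c). Qed.

Section Form.
Variable R : realType.
Variable n : nat.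
Hypothesis hn : (0 < n)%N.
Local Notation H := (quat R).
Local Notation V := (qvec R n).

Lemma rscaleE (z : V) l i j : rscale z l i j = z i j * l.
Proof. by rewrite mxE. Qed.

Lemma hform_addl (z z' w : V) : hform (z + z') w = hform z w + hform z' w.
Proof.
rewrite /hform !mxE mulrDr.
rewrite (eq_bigr (fun i => qconj (w i 0) * z i 0 + qconj (w i 0) * z' i 0)); last first.
  by move=> i _; rewrite mxE mulrDr.
rewrite big_split /= mulrDr.
by rewrite add3ACA.
Qed.

Lemma hform_addr (z w w' : V) : hform z (w + w') = hform z w + hform z w'.
Proof.
rewrite /hform !mxE qconjD mulrDl.
rewrite (eq_bigr (fun i => qconj (w i 0) * z i 0 + qconj (w' i 0) * z i 0)); last first.
  by move=> i _; rewrite mxE qconjD mulrDl.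
rewrite big_split /= qconjD mulrDl.
by rewrite add3ACA.
Qed.

Lemma hform_scalel (z w : V) l : hform (rscale z l) w = hform z w * l.
Proof.
rewrite /hform !mxE !mulrDl mulr_suml !mulrA.
by congr (_ + _ + _); apply: eq_bigr => i _; rewrite mxE mulrA.
Qed.

Lemma hform_scaler (z w : V) l : hform z (rscale w l) = qconj l * hform z w.
Proof.
rewrite /hform !mxE !mulrDr mulr_sumr !qconjM !mulrA.
by congr (_ + _ + _); apply: eq_bigr => i _; rewrite mxE qconjM mulrA.
Qed.

Lemma hform_conj (z w : V) : qconj (hform z w) = hform w z.
Proof.
rewrite /hform !qconjD (big_morph (@qconj R) (@qconjD R) (@qconj0 R)) !qconjM !qconjK.
rewrite (eq_bigr (fun i => qconj (z i 0) * w i 0)); last first.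
  by move=> i _; rewrite qconjM qconjK.
by rewrite addrC (addrC (qconj (z ord0 0) * _)) addrA.
Qed.

Lemma hform0l (w : V) : hform 0 w = 0.
Proof.
have -> : (0 : V) = rscale 0 0 by apply/matrixP => i j; rewrite !mxE mulr0.
by rewrite hform_scalel mulr0.
Qed.

Lemma hform_oppl (z w : V) : hform (- z) w = - hform z w.
Proof. by apply/eqP; rewrite -addr_eq0 -hform_addl addNr hform0l. Qed.

Lemma hform0r (z : V) : hform z 0 = 0.
Proof. by rewrite -hform_conj hform0l qconj0. Qed.

Lemma hform_oppr (z w : V) : hform z (- w) = - hform z w.
Proof. by rewrite -hform_conj hform_oppl qconjN hform_conj. Qed.

Lemma hform_subl (z z' w : V) : hform (z - z') w = hform z w - hform z' w.
Proof. by rewrite hform_addl hform_oppl. Qed.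
Lemma hform_subr (z w w' : V) : hform z (w - w') = hform z w - hform z w'.
Proof. by rewrite hform_addr hform_oppr. Qed.

Lemma hform_self_real (z : V) : hform z z = qreal (q0 (hform z z)).
Proof. by apply: qself_conj; rewrite hform_conj. Qed.

Definition phi (z : V) : H := z ord0 0 - z ord_max 0.
Definition nrm (z : V) : R := qnorm2 (z ord0 0) +
  \sum_(i < n.+1 | (0 < (i : nat) < n)%N) qnorm2 (z i 0) + qnorm2 (z ord_max 0).

Lemma phiD (z z' : V) : phi (z + z') = phi z + phi z'.
Proof. by rewrite /phi !mxE opprD addrACA. Qed.
Lemma phiS (z : V) l : phi (rscale z l) = phi z * l.
Proof. by rewrite /phi !mxE mulrBl. Qed.

Lemma hform_self_q0 (z : V) : q0 (hform z z) = nrm z - qnorm2 (phi z).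
Proof.
rewrite /hform !q0D (big_morph (@q0 R) (@q0D R) (@q0_0 R)).
rewrite (eq_bigr (fun i => qnorm2 (z i 0))); last first.
  by move=> i _; rewrite qconj_mull.
rewrite /nrm /phi /qnorm2 ?qE /=; ring.
Qed.

Lemma nrm_ge0 (z : V) : 0 <= nrm z.
Proof.
rewrite /nrm; apply: addr_ge0; [apply: addr_ge0|]; rewrite ?qnorm2_ge0 //.
by apply: sumr_ge0 => i _; apply: qnorm2_ge0.
Qed.

Lemma nrm_eq0 (z : V) : nrm z = 0 -> z = 0.
Proof.
rewrite /nrm => h.
have hs : 0 <= \sum_(i < n.+1 | (0 < (i : nat) < n)%N) qnorm2 (z i 0).
  by apply: sumr_ge0 => i _; apply: qnorm2_ge0.
have h0 := qnorm2_ge0 (z ord0 0); have h1 := qnorm2_ge0 (z ord_max 0).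
have e0 : qnorm2 (z ord0 0) = 0 by lra.
have e1 : qnorm2 (z ord_max 0) = 0 by lra.
have es : \sum_(i < n.+1 | (0 < (i : nat) < n)%N) qnorm2 (z i 0) = 0 by lra.
have {}es := psumr_eq0P (fun i _ => qnorm2_ge0 (z i 0)) es.
apply/matrixP => i j; rewrite (ord1 j) mxE; apply: qnorm2_eq0.
have [i0|i0] := eqVneq (i : nat) 0%N.
  by have -> : i = ord0 by apply: val_inj.
have [im|im] := eqVneq (i : nat) n.
  by have -> : i = ord_max by apply: val_inj.
apply: es.
rewrite lt0n i0 /= ltn_neqAle im /=; by rewrite -ltnS.
Qed.

Lemma pos_perp (t w : V) r : hform t t = qreal r -> r < 0 -> hform w t = 0 -> w != 0 ->
  0 < q0 (hform w w).
Proof.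
move=> htt r0 hwt w0.
have [hphi|hphi] := eqVneq (phi w) 0.
  rewrite hform_self_q0 hphi.
  have -> : qnorm2 (0 : H) = 0 by rewrite /qnorm2 /=; ring.
  rewrite subr0 lt_neqAle nrm_ge0 andbT; apply/eqP => /esym /nrm_eq0 h.
  by rewrite h eqxx in w0.
set b := - (qinv (phi w) * phi t).
set v := t + rscale w b.
have pv : phi v = 0.
  by rewrite /v phiD phiS /b mulrN mulrA qmulV // mul1r subrr.
have hv : hform v v = qreal r + qconj b * (qreal (q0 (hform w w)) * b).
  rewrite /v !hform_addl !hform_addr !hform_scalel !hform_scaler -(hform_conj w t) hwt.
  by rewrite qconj0 mul0r mulr0 !addr0 add0r -mulrA -hform_self_real htt.
have := hform_self_q0 v; rewrite pv hv.
have -> : qnorm2 (0 : H) = 0 by rewrite /qnorm2 /=; ring.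
rewrite subr0 mulrA q0D q0_conj_real /= => e.
have := nrm_ge0 v; rewrite -e => h.
have := qnorm2_ge0 b; nra.
Qed.

End Form.

Section Refl.
Variable R : realType.
Variable n : nat.
Hypothesis hn : (0 < n)%N.
Local Notation H := (quat R).
Local Notation V := (qvec R n).

Lemma sum_split3 (F : 'I_n.+1 -> H) :
  \sum_i F i = F ord0 + \sum_(i < n.+1 | (0 < (i : nat) < n)%N) F i + F ord_max.
Proof.
rewrite (bigD1 ord0) //= (bigD1 ord_max) /=; last first.
  by rewrite -val_eqE /= -lt0n hn.
rewrite -addrA; congr (_ + _); rewrite addrC; congr (_ + _); apply: eq_bigl => i.
rewrite -!val_eqE /= lt0n; congr (_ && _).
by rewrite ltn_neqAle -ltnS ltn_ord andbT.
Qed.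

Definition hrow (w : V) : 'rV[H]_(n.+1) :=
  \row_j (if (j : nat) == 0%N then qconj (w ord_max 0)
          else if (j : nat) == n then qconj (w ord0 0) else qconj (w j 0)).

Lemma hform_row (z w : V) : hform z w = (hrow w *m z) 0 0.
Proof.
rewrite mxE sum_split3 !mxE /= eqxx.
have -> : (n == 0%N) = false by apply/negbTE; rewrite -lt0n.
rewrite /hform; congr (_ + _ + _); apply: eq_bigr => i /andP [i0 iN].
by rewrite mxE (gtn_eqF i0) (ltn_eqF iN).
Qed.

Lemma colmul (x : V) (m : 'M[H]_1) : x *m m = rscale x (m 0 0).
Proof. by apply/matrixP => i j; rewrite (ord1 j) !mxE big_ord1. Qed.

Definition qrefl (w : V) (c : H) : 'M[H]_(n.+1) := 1%:M - rscale w c *m hrow w.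

Lemma qreflE (w : V) c z : qrefl w c *m z = z - rscale w (c * hform z w).
Proof.
rewrite /qrefl mulmxBl mul1mx -mulmxA colmul -hform_row; congr (_ - _).
by apply/matrixP => i j; rewrite !mxE mulrA.
Qed.

Lemma rscale1 (z : V) : rscale z 1 = z.
Proof. by apply/matrixP => i j; rewrite !mxE mulr1. Qed.
Lemma rscale0 (z : V) : rscale z 0 = 0.
Proof. by apply/matrixP => i j; rewrite !mxE mulr0. Qed.

Lemma in_Sp1 : in_Sp (1%:M : 'M[H]_(n.+1)).
Proof. by move=> z w; rewrite !mul1mx. Qed.

Lemma in_SpM (A B : 'M[H]_(n.+1)) : in_Sp A -> in_Sp B -> in_Sp (A *m B).
Proof. by move=> hA hB z w; rewrite -!mulmxA hA hB. Qed.

Lemma in_SpN (A : 'M[H]_(n.+1)) : in_Sp A -> in_Sp (- A).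
Proof. by move=> hA z w; rewrite !mulNmx hform_oppl hform_oppr opprK hA. Qed.

Lemma key_conj (g c : H) : g * c = 1 -> qconj c * (g + qconj g) * c = qconj c + c.
Proof.
move=> gc; rewrite mulrDr mulrDl -!mulrA gc mulr1 mulrA -qconjM gc qconj1 mul1r //.
Qed.

Lemma ww_eq (u e : V) : hform u u = hform e e ->
  hform (u - e) (u - e) = hform u (u - e) + qconj (hform u (u - e)).
Proof.
by move=> hue; rewrite !hform_subl !hform_subr qconjB !hform_conj -hue opprB.
Qed.

Lemma qrefl_spec (u e : V) : hform u u = hform e e -> hform u (u - e) != 0 ->
  exists T, [/\ in_Sp T, T *m u = e & forall y, hform y (u - e) = 0 -> T *m y = y].
Proof.
move=> hue g0; set w := u - e; set g := hform u w.
set c := qinv g.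
have gc : g * c = 1 by apply: qmulV.
have cg : c * g = 1 by apply: qmulVr.
have hN : hform w w = g + qconj g by apply: ww_eq.
have eg : hform u w = g by [].
have we : u - e = w by [].
clearbody c g w.
exists (qrefl w c); split.
- move=> z z'; rewrite !qreflE.
  rewrite !hform_subl !hform_subr !hform_scalel !hform_scaler hN.
  rewrite -(hform_conj z' w) !qconjM !mulrA.
  set a := hform z w; set b := qconj (hform z' w).
  have K : b * qconj c * (g + qconj g) * c * a = b * qconj c * a + b * c * a.
    by rewrite -(mulrA b (qconj c)) -(mulrA b) (key_conj gc) (mulrDr b) (mulrDl _ _ a).
  by rewrite K opprB addrK subrK.
- by rewrite qreflE eg cg rscale1 -we subKr.
- by move=> y hy; rewrite qreflE hy mulr0 rscale0 subr0.
Qed.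

End Refl.

Lemma subDB (T : zmodType) (a b : T) : b + b = (a + b) - (a - b).
Proof. by rewrite opprB [RHS]addrC [RHS]addrA subrK. Qed.

Section Extend.
Variable R : realType.
Variable n : nat.
Hypothesis hn : (0 < n)%N.
Local Notation H := (quat R).
Local Notation V := (qvec R n).

Lemma qreal_neq0 (r : R) : r != 0 -> qreal r != 0 :> H.
Proof. by move=> r0; apply/eqP => /(congr1 (@q0 R)) /= /eqP; rewrite (negPf r0). Qed.

Lemma reflect_step (u e t : V) r : hform u u = hform e e -> hform t t = qreal r -> r < 0 ->
  hform (u - e) t = 0 ->
  exists T, [/\ in_Sp T, T *m u = e & forall y, hform y (u - e) = 0 -> T *m y = y].
Proof.
move=> hue htt r0 hwt.
have [w0|w0] := eqVneq (u - e) 0.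
  exists 1%:M; split; first exact: in_Sp1.
    by rewrite mul1mx; apply: subr0_eq.
  by move=> y _; rewrite mul1mx.
apply: qrefl_spec => //; apply/eqP => g0.
have := pos_perp htt r0 hwt w0; rewrite ww_eq // g0 qconj0 addr0 /=.
by rewrite ltxx.
Qed.

Lemma map_timelike (u e : V) r : hform u u = hform e e -> hform u u = qreal r -> r < 0 ->
  exists D, in_Sp D /\ D *m u = e.
Proof.
move=> hue hur r0.
have [g0|g0] := eqVneq (hform u (u - e)) 0; last first.
  by have [T [hT Tu _]] := qrefl_spec hn hue g0; exists T.
have he : hform u e = hform u u.
  by rewrite hform_subr in g0; rewrite (subr0_eq g0).
have hue' : hform u u = hform (- e) (- e) by rewrite hform_oppl hform_oppr opprK.
have g1 : hform u (u - - e) != 0.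
  rewrite opprK hform_addr he hur -qrealD; apply: qreal_neq0.
  by apply/eqP; lra.
have [T [hT Tu _]] := qrefl_spec hn hue' g1.
by exists (- T); split; [exact: in_SpN | rewrite mulNmx Tu opprK].
Qed.

Lemma cancel2 (x y : V) : x + x = y + y -> x = y.
Proof.
move=> h; apply/matrixP => i j; have := congr1 (fun M : V => M i j) h; rewrite !mxE => h'.
have e0 := congr1 (@q0 R) h'; have e1 := congr1 (@q1 R) h';
have e2 := congr1 (@q2 R) h'; have e3 := congr1 (@q3 R) h'.
rewrite !qE in e0 e1 e2 e3.
apply: quatP; lra.
Qed.

Lemma extend_iso (p q : nat -> V) (N : nat) :
  (2 <= N)%N ->
  hform (p 1%N) (p 1%N) = 0 -> hform (p 2%N) (p 2%N) = 0 -> hform (p 1%N) (p 2%N) = 1 ->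
  (forall i j, (1 <= i <= N)%N -> (1 <= j <= N)%N -> hform (q i) (q j) = hform (p i) (p j)) ->
  exists D, in_Sp D /\ forall i, (1 <= i <= N)%N -> D *m p i = q i.
Proof.
move=> hN h11 h22 h12 G.
have r1 : (1 <= 1 <= N)%N by rewrite /= (leq_trans _ hN).
have r2 : (1 <= 2 <= N)%N by rewrite /= hN.
have h21 : hform (p 2%N) (p 1%N) = 1 by rewrite -hform_conj h12 qconj1.
have q11 : hform (q 1%N) (q 1%N) = 0 by rewrite G.
have q22 : hform (q 2%N) (q 2%N) = 0 by rewrite G.
have q12 : hform (q 1%N) (q 2%N) = 1 by rewrite G.
have q21 : hform (q 2%N) (q 1%N) = 1 by rewrite G.
set t := p 1%N - p 2%N; set s := p 1%N + p 2%N.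
set t' := q 1%N - q 2%N; set s' := q 1%N + q 2%N.
have m2 : (0 : H) - 1 - (1 - 0) = qreal (-2) by apply: quatP; rewrite ?qE /=; lra.
have htt : hform t t = qreal (-2).
  by rewrite /t !hform_subl !hform_subr h11 h12 h21 h22.
have htt' : hform t' t' = qreal (-2).
  by rewrite /t' !hform_subl !hform_subr q11 q12 q21 q22.
have [D1 [hD1 D1t]] : exists D, in_Sp D /\ D *m t = t'.
  by apply: (@map_timelike _ _ (-2)) => //; [rewrite htt htt' | lra].
have [T [hT Tu Ty]] : exists T, [/\ in_Sp T, T *m (D1 *m s) = s' &
    forall y, hform y (D1 *m s - s') = 0 -> T *m y = y].
  apply: (@reflect_step _ _ t' (-2)); last 2 first.
  - by lra.
  - rewrite hform_subl -{1}D1t hD1 /s /s' /t /t' !hform_addl !hform_subr.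
    by rewrite q11 q12 q21 q22 h11 h12 h21 h22 subrr.
  - rewrite hD1 /s /s' !hform_addl !hform_addr.
    by rewrite q11 q12 q21 q22 h11 h12 h21 h22.
  - exact: htt'.
have Tt' : T *m t' = t'.
  apply: Ty; rewrite -hform_conj hform_subl -{1}D1t hD1 /s /s' /t /t' !hform_addl !hform_subr.
  by rewrite q11 q12 q21 q22 h11 h12 h21 h22 subrr qconj0.
set D2 := T *m D1.
have hD2 : in_Sp D2 by apply: in_SpM.
have D2s : D2 *m s = s' by rewrite /D2 -mulmxA Tu.
have D2t : D2 *m t = t' by rewrite /D2 -mulmxA D1t Tt'.
have D2p1 : D2 *m p 1%N = q 1%N.
  apply: cancel2; rewrite -mulmxDr.
  have -> : p 1%N + p 1%N = s + t by rewrite /s /t addrACA subrr addr0.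
  have -> : q 1%N + q 1%N = s' + t' by rewrite /s' /t' addrACA subrr addr0.
  by rewrite mulmxDr D2s D2t.
have D2p2 : D2 *m p 2%N = q 2%N.
  apply: cancel2; rewrite -mulmxDr.
  have -> : p 2%N + p 2%N = s - t by rewrite /s /t (subDB (p 1%N)).
  have -> : q 2%N + q 2%N = s' - t' by rewrite /s' /t' (subDB (q 1%N)).
  by rewrite mulmxBr D2s D2t.
suff : forall m, (m.+2 <= N)%N -> exists D, in_Sp D /\
    forall i, (1 <= i <= m.+2)%N -> D *m p i = q i.
  have eN : (N - 2).+2 = N by lia.
  by move=> /(_ (N - 2)%N); rewrite eN leqnn; apply.
elim => [|m IH] hm.
  exists D2; split => // i /andP [i1 i2].
  by case: i i1 i2 => [|[|[|]]] //= _ _.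
have [D [hD Dp]] := IH (ltnW hm).
have rm : (1 <= m.+3 <= N)%N by rewrite hm.
have ri : forall i, (1 <= i <= m.+2)%N -> (1 <= i <= N)%N.
  by move=> i /andP [-> /leq_trans]; apply; apply: ltnW.
set u := D *m p m.+3; set e := q m.+3.
have hue : hform u u = hform e e by rewrite hD G.
have orth : forall i, (1 <= i <= m.+2)%N -> hform (u - e) (q i) = 0.
  move=> i hi; rewrite hform_subl -{1}(Dp i hi) hD G ?subrr //; exact: ri.
have [T' [hT' T'u T'y]] := reflect_step hue htt' (ltac:(lra) : (-2 : R) < 0)
  (ltac:(rewrite /t' hform_subr !orth ?subrr //) : hform (u - e) t' = 0).
exists (T' *m D); split; first exact: in_SpM.
move=> i /andP [i1]; rewrite leq_eqVlt => /orP [/eqP ->|i2].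
  by rewrite -mulmxA T'u.
rewrite -mulmxA Dp ?i1 //; apply: T'y.
by rewrite -hform_conj orth ?i1 // qconj0.
Qed.

End Extend.

Section Final.
Variable R : realType.
Local Notation H := (quat R).

Lemma lam_unit (nu l2 l3 g g' : H) : qconj l2 * nu = 1 -> qconj l3 * nu = 1 ->
  g = qconj l3 * g' * l2 -> qnorm2 g = 1 -> qnorm2 g' = 1 ->
  [/\ qnorm2 nu = 1, l2 = nu & l3 = nu].
Proof.
move=> e2 e3 eg n1 n1'.
have nu0 : nu != 0.
  by apply/eqP => nu0; move: e2; rewrite nu0 mulr0 => /esym/eqP; rewrite oner_eq0.
have c23 : qconj l2 = qconj l3.
  apply/eqP; rewrite -subr_eq0; apply/eqP; apply: (qmul_eq0l _ nu0).
  by rewrite mulrBl e2 e3 subrr.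
have l23 : l2 = l3 by rewrite -[l2]qconjK c23 qconjK.
have nl : qnorm2 l2 = 1.
  move: n1; rewrite eg !qnorm2M qnorm2_conj n1' mulr1 -l23 => h.
  have := qnorm2_ge0 l2; nra.
have l2nu : l2 = nu.
  have : l2 * (qconj l2 * nu) = l2 by rewrite e2 mulr1.
  by rewrite mulrA qconj_mulr nl qreal1 mul1r => ->.
by split => //; [rewrite -l2nu | rewrite -l23].
Qed.

Lemma lam_eq (nu l : H) : qnorm2 nu = 1 -> (qconj l * nu = 1 \/ qconj nu * l = 1) -> l = nu.
Proof.
move=> n1 [e|e].
  have : qconj l * nu * qconj nu = qconj nu by rewrite e mul1r.
  by rewrite -mulrA qconj_mulr n1 qreal1 mulr1 => h; rewrite -[l]qconjK h qconjK.
have : nu * (qconj nu * l) = nu by rewrite e mulr1.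
by rewrite mulrA qconj_mulr n1 qreal1 mul1r.
Qed.

Lemma qnorm2_1 : qnorm2 (1 : H) = 1.
Proof. by rewrite /qnorm2 ?qE; rewrite expr1n expr0n /= !addr0. Qed.

Lemma orbit_conj n (G G' : 'M[H]_(2 * n)) nu : qnorm2 nu = 1 ->
  (forall i j, G i j = qconj nu * G' i j * nu) ->
  forall M, Sp1_orbit G M <-> Sp1_orbit G' M.
Proof.
move=> n1 hG M; have nn : nu * qconj nu = 1 by rewrite qconj_mulr n1 qreal1.
split => [[mu [mu1 ->]]|[mu [mu1 ->]]].
  exists (mu * qconj nu); split.
    by rewrite /is_unit_quat qnorm2M qnorm2_conj mu1 n1 mulr1.
  by apply/matrixP => i j; rewrite !mxE hG qconjM qconjK !mulrA.
exists (mu * nu); split.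
  by rewrite /is_unit_quat qnorm2M mu1 n1 mulr1.
apply/matrixP => i j; rewrite !mxE hG qconjM !mulrA.
by rewrite -(mulrA mu nu) nn mulr1 -(mulrA _ nu) nn mulr1.
Qed.

Lemma rscale_neq0 n (x : qvec R n) l : x != 0 -> l != 0 -> rscale x l != 0.
Proof.
move=> x0 l0; apply: contra x0 => /eqP h; apply/eqP/matrixP => i j.
have := congr1 (fun M : qvec R n => M i j) h; rewrite !mxE => h'.
exact: (qmul_eq0l h' l0).
Qed.

Lemma pos_neq0 n (x : qvec R n) : pos_vec x -> x != 0.
Proof.
case=> r r0 hx; apply/eqP => x0; move: hx; rewrite x0 hform0l => /(congr1 (@q0 R)) /=.
by move=> e; move: r0; rewrite -e ltxx.
Qed.

End Final.

Theorem mainTheorem8 (R : realType) (n : nat) (hn : (2 <= n)%N)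
    (A B A' B' : 'M[quat R]_(n.+1))
    (aA rA aB rB aA' rA' aB' rB' : qvec R n)
    (xA xB xA' xB' : nat -> qvec R n) :
  weakly_nonsingular A B aA rA xA aB rB xB ->
  weakly_nonsingular A' B' aA' rA' xA' aB' rB' xB' ->
  normalized (assoc_tuple aA rA xA aB rB xB) ->
  normalized (assoc_tuple aA' rA' xA' aB' rB' xB') ->
  (exists C : 'M[quat R]_(n.+1), in_Sp C /\
     forall i, (1 <= i <= 2 * n)%N ->
       same_point (C *m assoc_tuple aA rA xA aB rB xB i)
                  (assoc_tuple aA' rA' xA' aB' rB' xB' i))
  <->
  (forall M, Sp1_orbit (gram (assoc_tuple aA rA xA aB rB xB)) M <->
             Sp1_orbit (gram (assoc_tuple aA' rA' xA' aB' rB' xB')) M).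
Proof.
move=> WA WA' NA NA'.
have hn1 : (0 < n)%N by rewrite (leq_trans _ hn).
set p := assoc_tuple aA rA xA aB rB xB.
set p' := assoc_tuple aA' rA' xA' aB' rB' xB'.
have r1 : (1 <= 1 <= 2 * n)%N by apply/andP; split => //; lia.
have r2 : (1 <= 2 <= 2 * n)%N by apply/andP; split => //; lia.
have r3 : (1 <= 3 <= 2 * n)%N by apply/andP; split => //; lia.
have p'nz : forall i, (1 <= i <= 2 * n)%N -> p' i != 0.
  case: WA' => [[_ [[aA0 _] _] [[rA0 _] _] xA0] [_ [[aB0 _] _] [[rB0 _] _] xB0] _ _ _].
  move=> i /andP [i1 i2]; rewrite /p' /assoc_tuple.
  case: ifP => // /negbT /eqP e1; case: ifP => // /negbT /eqP e2.
  case: ifP => // /negbT /eqP e3; case: ifP => // /negbT /eqP e4.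
  case: ifP => hle.
    by apply: pos_neq0; apply: (proj1 (xA0 _ _)); apply/andP; split; lia.
  by move/negbT: hle => hle; apply: pos_neq0; apply: (proj1 (xB0 _ _)); apply/andP; split; lia.
split.
- case=> C [hC hp].
  have rel : forall i j li lj, C *m p i = rscale (p' i) li -> C *m p j = rscale (p' j) lj ->
      hform (p i) (p j) = qconj lj * hform (p' i) (p' j) * li.
    by move=> i j li lj ei ej; rewrite -hC ei ej hform_scaler hform_scalel mulrA.
  have lam : forall i, (1 <= i <= 2 * n)%N -> exists l, C *m p i = rscale (p' i) l.
    by move=> i hi; have [_ [_ [l [_ el]]]] := hp i hi; exists l.
  have [nu e1] := lam 1%N r1; have [l2 e2] := lam 2%N r2; have [l3 e3] := lam 3%N r3.
  case: NA => [[g12 g13] g14 n23 gk gj]; case: NA' => [[g12' g13'] g14' n23' gk' gj'].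
  rewrite /gram_entry in g12 g13 g14 n23 gk gj g12' g13' g14' n23' gk' gj'.
  have E12 : qconj l2 * nu = 1 by have := rel _ _ _ _ e1 e2; rewrite g12 g12' mulr1.
  have E13 : qconj l3 * nu = 1 by have := rel _ _ _ _ e1 e3; rewrite g13 g13' mulr1.
  have [nu1 l2nu l3nu] := lam_unit E12 E13 (rel _ _ _ _ e2 e3) n23 n23'.
  have allnu : forall i, (1 <= i <= 2 * n)%N -> forall l, C *m p i = rscale (p' i) l -> l = nu.
    move=> i /andP [i1 i2] l el; apply: lam_eq nu1 _.
    have [ei|i1'] := eqVneq i 1%N.
      by subst i; right; have := rel _ _ _ _ el e2; rewrite g12 g12' mulr1 l2nu.
    have [hj|hj] := boolP (5 <= i <= n.+2)%N.
      by left; have := rel _ _ _ _ e3 el; rewrite gj ?gj' // mulr1 l3nu.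
    left; have := rel _ _ _ _ e1 el.
    have [ei|i2'] := eqVneq i 2%N; first by subst i; rewrite g12 g12' mulr1.
    have [ei|i3'] := eqVneq i 3%N; first by subst i; rewrite g13 g13' mulr1.
    have [ei|i4'] := eqVneq i 4%N; first by subst i; rewrite g14 g14' mulr1.
    have hk : (n.+3 <= i <= 2 * n)%N.
      move/eqP: i1'; move/eqP: i2'; move/eqP: i3'; move/eqP: i4'; move: hj.
      rewrite negb_and -!ltnNge; move=> hj *; apply/andP; split => //.
      case/orP: hj => hj //; lia.
    by rewrite gk ?gk' // mulr1.
  apply: (orbit_conj nu1) => a b; rewrite !mxE /gram_entry.
  have ha : (1 <= a.+1 <= 2 * n)%N by rewrite ltn_ord.
  have hb : (1 <= b.+1 <= 2 * n)%N by rewrite ltn_ord.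
  have [la ea] := lam _ ha; have [lb eb] := lam _ hb.
  by rewrite (rel _ _ _ _ ea eb) (allnu _ ha _ ea) (allnu _ hb _ eb).
- move=> horb.
  have : Sp1_orbit (gram p') (gram p).
    apply/horb; exists 1; split; first exact: qnorm2_1.
    by apply/matrixP => i j; rewrite !mxE mul1r qconj1 mulr1.
  case=> mu [mu1 eG].
  have G : forall i j, (1 <= i <= 2 * n)%N -> (1 <= j <= 2 * n)%N ->
      hform (p i) (p j) = mu * hform (p' i) (p' j) * qconj mu.
    move=> i j /andP [i1 i2] /andP [j1 j2].
    have pi : (i.-1 < 2 * n)%N by lia.
    have pj : (j.-1 < 2 * n)%N by lia.
    have := congr1 (fun M : 'M[quat R]_(2 * n) => M (Ordinal pi) (Ordinal pj)) eG.
    by rewrite !mxE /gram_entry /= !prednK.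
  set q := fun i => rscale (p' i) (qconj mu).
  have Gq : forall i j, (1 <= i <= 2 * n)%N -> (1 <= j <= 2 * n)%N ->
      hform (q i) (q j) = hform (p i) (p j).
    by move=> i j hi hj; rewrite /q hform_scalel hform_scaler qconjK G // !mulrA.
  case: WA => [[_ [[_ h11] _] [[_ h22] _] _] _ _ _ _].
  case: NA => [[g12 _] _ _ _ _]; rewrite /gram_entry in g12.
  have [D [hD Dp]] := extend_iso hn1 (ltac:(lia) : (2 <= 2 * n)%N) h11 h22 g12 Gq.
  have mu0 : qconj mu != 0.
    apply/eqP => h; move: mu1; rewrite /is_unit_quat -qnorm2_conj h.
    by rewrite /qnorm2 /= expr0n /= !addr0 => /eqP; rewrite eq_sym oner_eq0.
  exists D; split => // i hi; rewrite Dp //; split; first exact: rscale_neq0 (p'nz _ hi) mu0.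
  by split; [exact: p'nz | exists (qconj mu)].
Qed.
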